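(* Let $A$ be an algebra equipped with the idempotent grading associated to a decomposition $1_A=e^\ast_0+\cdots+e^\ast_n$, and let $B\subseteq A$ be a complete $\mathbb{N}$-graded subalgebra, with $H:=B_0$ and $B_+:=\bigoplus_{j>0}B_j$. If $A$ is projective as a right $B$-module and $B$ is projective as a left $H$-module, then $(B,H)$ is a pre-Borelic pair of $A$ (with respect to the ideal $B_+$).
   Context: All algebras are finite-dimensional, associative and unital over a field $\Bbbk$; subalgebras contain the unit; modules are finitely generated unital left modules. Idempotent grading: given mutually orthogonal (not necessarily primitive, possibly zero) idempotents $e^\ast_0,\dots,e^\ast_n$ with $1_A=\sum_i e^\ast_i$, set $A_j=\bigoplus_{i}e^\ast_iAe^\ast_{i+j}$ (sum over $i$ with $0\le i,i+j\le n$) for $j\in\mathbb{Z}$; then $A=\bigoplus_jA_j$ is a $\mathbb{Z}$-graded algebra. Put $A_-=\bigoplus_{j<0}A_j$. An $\mathbb{N}$-graded subalgebra is a graded subalgebra $B$ with $B_j=0$ for $j<0$; it is complete if $A=B\oplus A_-B$. A pair $(B,H)$ of subalgebras $H\subseteq B\subseteq A$ is a pre-Borelic pair of $A$ if there is a two-sided ideal $B_+$ of $B$ with $B=H\oplus B_+$ such that: (I) $A$ is projective as a right $B$-module and $B$ is projective as a left $H$-module; (II) for every simple $A$-module $L$, the space $L^{B_+}=\{v\in L: xv=0\ \forall x\in B_+\}$ (a $B$-module annihilated by $B_+$, hence an $H$-module via $H\cong B/B_+$) is a simple $H$-module, and $L\mapsto L^{B_+}$ induces a bijection between isomorphism classes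 of simple $A$-modules and of simple $H$-modules; (III) $B_+$ is contained in the Jacobson radical of $B$. *)

(* Defs.v *)
(* finite-dimensional algebras as falgType, modules as matrix representations *)
From HB Require Import structures.
From mathcomp Require Import all_boot all_order all_algebra all_field.
Set Implicit Arguments. Unset Strict Implicit. Unset Printing Implicit Defensive.
Import GRing.Theory.
Local Open Scope ring_scope.

Section Defs.
Variables (F : fieldType) (A : falgType F).

Definition idem_decomp n (e : 'I_n.+1 -> A) :=
  (forall i j, e i * e j = if i == j then e i else 0) /\ \sum_(i < n.+1) e i = 1.

Definition grpiece n (e : 'I_n.+1 -> A) (j : int) : {vspace A} :=
  (\sum_(i < n.+1) \sum_(k < n.+1 | (k%:Z - i%:Z == j)%R)
      (<[e i]> * fullv * <[e k]>))%VS.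

Definition Aminus n (e : 'I_n.+1 -> A) : {vspace A} :=
  (\sum_(j < n) grpiece e (- (j.+1)%:Z))%VS.

Definition Bplus n (e : 'I_n.+1 -> A) (B : {vspace A}) : {vspace A} :=
  (\sum_(j < n) (B :&: grpiece e (j.+1)%:Z))%VS.

Definition Bzero n (e : 'I_n.+1 -> A) (B : {vspace A}) : {vspace A} :=
  (B :&: grpiece e 0)%VS.

Definition is_subalg (B : {vspace A}) := (1 \in B) /\ (B * B <= B)%VS.

(** graded subspace: B = (+)_j (B :&: A_j), j = -n, ..., n (A_j = 0 otherwise) *)
Definition graded n (e : 'I_n.+1 -> A) (B : {vspace A}) :=
  B = (\sum_(j < (n.*2).+1) (B :&: grpiece e (j%:Z - n%:Z)))%VS.

Definition Ngraded_subalg n (e : 'I_n.+1 -> A) (B : {vspace A}) :=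
  [/\ is_subalg B, graded e B & forall j : int, j < 0 -> (B :&: grpiece e j)%VS = 0%VS].

Definition complete n (e : 'I_n.+1 -> A) (B : {vspace A}) :=
  (B + Aminus e * B)%VS = fullv /\ (B :&: (Aminus e * B))%VS = 0%VS.

(** M (a subspace of A, closed under right mult. by S) is projective as a right
    S-module: it is a direct summand of a free module S^k, i.e. there are right
    S-linear maps i = (f_j)_j : M -> S^k and p : S^k -> M, p(s) = \sum_j a_j s_j,
    with p \o i = id. *)
Definition proj_right (M S : {vspace A}) :=
  exists k (a : 'I_k -> A) (f : 'I_k -> 'End(A)),
    [/\ forall j, a j \in M,
        forall j x, x \in M -> f j x \in S,
        forall j x s, x \in M -> s \in S -> f j (x * s) = f j x * s &
        forall x, x \in M -> \sum_(j < k) a j * f j x = x].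

Definition proj_left (M S : {vspace A}) :=
  exists k (a : 'I_k -> A) (f : 'I_k -> 'End(A)),
    [/\ forall j, a j \in M,
        forall j x, x \in M -> f j x \in S,
        forall j x s, x \in M -> s \in S -> f j (s * x) = s * f j x &
        forall x, x \in M -> \sum_(j < k) f j x * a j = x].

(** A (finite-dimensional, unital, left) module over the subalgebra S of A on
    F^m (row vectors): x acts by v |-> v *m rho x. Only the values on S matter. *)
Definition is_rep (S : {vspace A}) m (rho : A -> 'M[F]_m) :=
  [/\ rho 1 = 1%:M,
      {in S &, forall a b, rho (a + b) = rho a + rho b},
      {in S, forall a (c : F), rho (c *: a) = c *: rho a} &
      {in S &, forall a b, rho (a * b) = rho b *m rho a}].

Definition stable (S : {vspace A}) m (rho : A -> 'M[F]_m) (U : 'M[F]_m) :=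
  forall s, s \in S -> (U *m rho s <= U)%MS.

Definition simple_sub (S : {vspace A}) m (rho : A -> 'M[F]_m) (U : 'M[F]_m) :=
  [/\ stable S rho U, U != 0 &
      forall V : 'M[F]_m, stable S rho V -> (V <= U)%MS -> V = 0 \/ (V == U)%MS].

Definition iso_sub (S : {vspace A}) m1 (rho1 : A -> 'M[F]_m1) (U1 : 'M[F]_m1)
    m2 (rho2 : A -> 'M[F]_m2) (U2 : 'M[F]_m2) :=
  exists f : 'M[F]_(m1, m2),
    [/\ (U1 *m f == U2)%MS, \rank (U1 *m f) = \rank U1 &
        forall s, s \in S -> U1 *m rho1 s *m f = U1 *m f *m rho2 s].

Definition fixsp (Bp : {vspace A}) m (rho : A -> 'M[F]_m) : 'M[F]_m :=
  (\bigcap_(b <- vbasis Bp) kermx (rho b))%MS.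

Definition left_ideal (S I : {vspace A}) := (I <= S)%VS /\ (S * I <= I)%VS.
Definition max_left_ideal (S I : {vspace A}) :=
  [/\ left_ideal S I, I != S &
      forall I', left_ideal S I' -> (I <= I')%VS -> I' = I \/ I' = S].
Definition in_jacobson (S : {vspace A}) (x : A) :=
  x \in S /\ forall I, max_left_ideal S I -> x \in I.

Definition pre_borelic (B H Bp : {vspace A}) :=
  [/\ is_subalg B /\ is_subalg H /\ (H <= B)%VS,
      [/\ (Bp <= B)%VS, (B * Bp <= Bp)%VS & (Bp * B <= Bp)%VS]
        /\ (H + Bp)%VS = B /\ (H :&: Bp)%VS = 0%VS,
      proj_right fullv B /\ proj_left B H,
      [/\ forall m (rho : A -> 'M[F]_m), is_rep fullv rho ->
            simple_sub fullv rho 1%:M -> simple_sub H rho (fixsp Bp rho),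
          forall m1 (rho1 : A -> 'M[F]_m1) m2 (rho2 : A -> 'M[F]_m2),
            is_rep fullv rho1 -> simple_sub fullv rho1 1%:M ->
            is_rep fullv rho2 -> simple_sub fullv rho2 1%:M ->
            (iso_sub fullv rho1 1%:M rho2 1%:M <->
             iso_sub H rho1 (fixsp Bp rho1) rho2 (fixsp Bp rho2)) &
          forall m' (rho' : A -> 'M[F]_m'), is_rep H rho' ->
            simple_sub H rho' 1%:M ->
            exists m (rho : A -> 'M[F]_m),
              [/\ is_rep fullv rho, simple_sub fullv rho 1%:M &
                  iso_sub H rho (fixsp Bp rho) rho' 1%:M]] &
      forall x, x \in Bp -> in_jacobson B x].

End Defs.

(* Main.v *)
Require Import Defs.
From Stdlib Require Import Classical.
From HB Require Import structures.
From mathcomp Require Import all_boot all_order all_algebra all_field zify.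
Import GRing.Theory.
Set Implicit Arguments. Unset Strict Implicit. Unset Printing Implicit Defensive.
Local Open Scope ring_scope.

Section Lin.
Variables (F : fieldType) (A : falgType F).

Definition lclosed (P : A -> Prop) :=
  [/\ P 0, forall x y, P x -> P y -> P (x + y) & forall (a : F) x, P x -> P (a *: x)].

Lemma lclosed_sum (P : A -> Prop) (I : Type) (r : seq I) (Q : pred I) (f : I -> A) :
  lclosed P -> (forall i, Q i -> P (f i)) -> P (\sum_(i <- r | Q i) f i).
Proof.
case=> P0 PD PZ Hf; elim/big_rec: _ => // i x Qi Px; exact: PD (Hf _ Qi) Px.
Qed.

Lemma lclosed_vs (P : A -> Prop) (U : {vspace A}) :
  lclosed P -> (forall i : 'I_(\dim U), P (vbasis U)`_i) -> forall x, x \in U -> P x.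
Proof.
move=> Pc Hb x /coord_vbasis ->; apply: lclosed_sum => // i _.
by case: Pc => _ _ PZ; apply: PZ.
Qed.

Lemma lclosed_span (P : A -> Prop) (X : seq A) :
  lclosed P -> (forall x, x \in X -> P x) -> forall x, x \in <<X>>%VS -> P x.
Proof.
move=> Pc HX x; rewrite -[X]/(tval (in_tuple X)) => /coord_span ->.
apply: lclosed_sum => // i _; case: Pc => _ _ PZ; apply: PZ; apply: HX.
exact: mem_nth.
Qed.

Lemma lclosed_prodv (P : A -> Prop) (U V : {vspace A}) :
  lclosed P -> (forall u v, u \in U -> v \in V -> P (u * v)) ->
  forall x, x \in (U * V)%VS -> P x.
Proof.
move=> Pc H x; rewrite [@prodv _ _]unlock; apply: lclosed_span => // y.
case/allpairsP => [[u v] /= [Uu Vv ->]]; apply: H; exact: vbasis_mem.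
Qed.

Lemma lclosed_sumv (P : A -> Prop) (I : finType) (Q : pred I) (Us : I -> {vspace A}) :
  lclosed P -> (forall i x, Q i -> x \in Us i -> P x) ->
  forall x, x \in (\sum_(i | Q i) Us i)%VS -> P x.
Proof.
move=> Pc H x /memv_sumP [vs Hvs ->]; apply: lclosed_sum => // i Qi.
exact: H (Hvs i Qi).
Qed.

End Lin.

Section Grading.
Variables (F : fieldType) (A : falgType F) (n : nat) (e : 'I_n.+1 -> A).
Hypothesis He : idem_decomp e.

Lemma eM i j : e i * e j = if i == j then e i else 0.
Proof. by case: He. Qed.
Lemma esum : \sum_(i < n.+1) e i = 1.
Proof. by case: He. Qed.
Lemma eMe i : e i * e i = e i.
Proof. by rewrite eM eqxx. Qed.
Lemma eMne i j : i != j -> e i * e j = 0.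
Proof. by rewrite eM => /negbTE ->. Qed.

Lemma decomp x : x = \sum_(i < n.+1) \sum_(k < n.+1) e i * x * e k.
Proof.
rewrite -{1}[x]mul1r -{1}[x]mulr1 -esum mulr_suml; apply: eq_bigr => i _.
by rewrite !mulr_sumr; apply: eq_bigr => k _; rewrite mulrA.
Qed.

Lemma eq0_decomp x : (forall i k, e i * x * e k = 0) -> x = 0.
Proof. by move=> H; rewrite [x]decomp big1 // => i _; rewrite big1. Qed.

Definition ghom (j : int) x := forall i k : 'I_n.+1, (k%:Z - i%:Z != j) -> e i * x * e k = 0.

Lemma lclosed_eik (P : 'I_n.+1 -> 'I_n.+1 -> bool) :
  lclosed (fun x => forall i k, P i k -> e i * x * e k = 0).
Proof.
split=> [i k _|x y Hx Hy i k Pik|a x Hx i k Pik]; first by rewrite mulr0 mul0r.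
  by rewrite mulrDr mulrDl Hx // Hy // addr0.
by rewrite -scalerAr -scalerAl Hx // scaler0.
Qed.

Lemma piece_e i k x : x \in (<[e i]> * fullv * <[e k]>)%VS -> x = e i * x * e k.
Proof.
have Pc : lclosed (fun x => x = e i * x * e k).
  split=> [|x1 y1 H1 H2|a x1 H1]; first by rewrite mulr0 mul0r.
    by rewrite mulrDr mulrDl -H1 -H2.
  by rewrite -scalerAr -scalerAl -H1.
apply: (lclosed_prodv Pc) => u v Hu /vlineP [c ->].
have Pc2 : lclosed (fun u => u = e i * u).
  split=> [|x1 y1 H1 H2|a x1 H1]; first by rewrite mulr0.
    by rewrite mulrDr -H1 -H2.
  by rewrite -scalerAr -H1.
have -> : u = e i * u.
  apply: (lclosed_prodv Pc2) Hu => u1 v1 /vlineP [c1 ->] _.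
  by rewrite -!scalerAl scalerAr mulrA eMe.
by rewrite -!scalerAr !scalerAl !mulrA -!scalerAl eMe -(mulrA _ (e k)) eMe.
Qed.

Lemma grpieceP j x : x \in grpiece e j -> ghom j x.
Proof.
rewrite /grpiece => Hx.
pose P i k := (k%:Z - i%:Z != j).
apply: (lclosed_sumv (lclosed_eik P)) Hx => i y _.
apply: (lclosed_sumv (lclosed_eik P)) => k z /eqP Hk /piece_e -> i' k'.
rewrite /P -Hk => Hne.
have [Ei|Hi] := eqVneq i' i; last by rewrite !mulrA (@eMne i' i) ?mul0r.
have [Ek|Hk'] := eqVneq k' k; last by rewrite -!mulrA (@eMne k k') ?mulr0 // eq_sym.
by move: Hne; rewrite /P Ei Ek eqxx.
Qed.

Lemma grpieceI j x : ghom j x -> x \in grpiece e j.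
Proof.
move=> Hh; rewrite [x]decomp; apply: memv_sumr => i _.
rewrite (bigID (fun k : 'I_n.+1 => k%:Z - i%:Z == j)) /=.
rewrite [X in _ + X]big1 ?addr0; last by move=> k Hk; rewrite Hh.
apply: memv_sumr => k _.
by rewrite memv_mul // ?memv_line // memv_mul // ?memv_line ?memvf.
Qed.

Lemma homP j x : reflect (ghom j x) (x \in grpiece e j).
Proof. by apply: (iffP idP); [apply: grpieceP | apply: grpieceI]. Qed.

(* degree >= d *)
Definition up (d : nat) x := forall i k : 'I_n.+1, (k < i + d)%N -> e i * x * e k = 0.
(* strictly lower *)
Definition lowp x := forall i k : 'I_n.+1, (i <= k)%N -> e i * x * e k = 0.

Lemma split_mid i k x y :
  e i * (x * y) * e k = \sum_(l < n.+1) (e i * x * e l) * (e l * y * e k).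
Proof.
rewrite (eq_bigr (fun l => e i * (x * e l * y) * e k)); last first.
  by move=> l _; rewrite !mulrA -[e i * x * e l * e l]mulrA eMe.
by rewrite -mulr_suml -mulr_sumr -mulr_suml -mulr_sumr esum mulr1.
Qed.

Lemma upM d d' x y : up d x -> up d' y -> up (d + d') (x * y).
Proof.
move=> Hx Hy i k Hik; rewrite split_mid big1 // => l _.
have [Hl|Hl] := ltnP l (i + d); first by rewrite Hx // mul0r.
rewrite Hy ?mulr0 //; apply: leq_trans Hik _.
by rewrite addnA leq_add2r.
Qed.

Lemma up_top x : up n.+1 x -> x = 0.
Proof.
move=> H; apply: eq0_decomp => i k; apply: H.
by apply: leq_trans (ltn_ord k) _; rewrite leq_addl.
Qed.

Lemma upW d d' x : (d' <= d)%N -> up d x -> up d' x.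
Proof. move=> Hd H i k Hk; apply: H; apply: leq_trans Hk _; by rewrite leq_add2l. Qed.

Lemma hom_up (d : nat) x : ghom d%:Z x -> up d x.
Proof. move=> H i k Hk; apply: H; apply/eqP => Hd; lia. Qed.

Lemma hom_neg (d : nat) x : ghom (- (d.+1)%:Z) x -> lowp x.
Proof. move=> H i k Hk; apply: H; apply/eqP => Hd; lia. Qed.

Lemma lsum i x : e i * x = \sum_(k < n.+1) e i * x * e k.
Proof. by rewrite -mulr_sumr esum mulr1. Qed.
Lemma rsum i x : x * e i = \sum_(k < n.+1) e k * x * e i.
Proof. by rewrite -mulr_suml -mulr_suml esum mul1r. Qed.

Lemma hom0_ee x i : ghom 0 x -> e i * x = e i * x * e i.
Proof.
move=> H; rewrite {1}lsum (bigD1 i) //= big1 ?addr0 // => k Hk.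
by rewrite H // subr_eq0 eqz_nat.
Qed.

Lemma hom0_comm x i : ghom 0 x -> e i * x = x * e i.
Proof.
move=> H; rewrite hom0_ee // [RHS]rsum (bigD1 i) //= big1 ?addr0 // => k Hk.
by rewrite H // subr_eq0 eqz_nat eq_sym.
Qed.

Lemma hom0_diag x : (forall i k, i != k -> e i * x * e k = 0) -> ghom 0 x.
Proof.
move=> H i k Hne; apply: H; apply: contra Hne => /eqP ->; by rewrite subrr.
Qed.

Lemma hom_e x i : ghom 0 x -> e i * x * e i = x * e i.
Proof. by move=> H; rewrite hom0_comm // -mulrA eMe. Qed.

Lemma homM j j' x y : ghom j x -> ghom j' y -> ghom (j + j') (x * y).
Proof.
move=> Hx Hy i k Hik; rewrite split_mid big1 // => l _.
have [Hl|Hl] := eqVneq (l%:Z - i%:Z) j; last by rewrite Hx // mul0r.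
rewrite Hy ?mulr0 //; apply: contra Hik => /eqP Hk; apply/eqP; lia.
Qed.

Lemma one_hom0 : ghom 0 1.
Proof. by apply: hom0_diag => i k Hik; rewrite mulr1 eMne. Qed.

Lemma hom_shift (d : int) x i : ghom d x ->
  x * e i = 0 \/ exists l, x * e i = e l * x.
Proof.
move=> H.
case: (pickP (fun l : 'I_n.+1 => i%:Z - l%:Z == d)) => [l /eqP Hl|Hn].
  right; exists l; rewrite rsum (bigD1 l) //= big1 ?addr0.
    rewrite [RHS]lsum (bigD1 i) //= big1 ?addr0 // => k Hk.
    apply: H; apply/eqP => Hd; move/eqP: Hk; apply; apply/val_inj => /=; lia.
  move=> k Hk; apply: H; apply/eqP => Hd; move/eqP: Hk; apply; apply/val_inj => /=; lia.
left; rewrite rsum big1 // => l _; apply: H; by rewrite Hn.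
Qed.

End Grading.

Section BStruct.
Variables (F : fieldType) (A : falgType F) (n : nat) (e : 'I_n.+1 -> A) (B : {vspace A}).
Hypothesis He : idem_decomp e.
Hypothesis HNg : Ngraded_subalg e B.

Local Notation H := (Bzero e B).
Local Notation Bp := (Bplus e B).

Lemma up_lclosed d : lclosed (up e d).
Proof. exact: (lclosed_eik e (fun i k : 'I_n.+1 => (k < i + d)%N)). Qed.
Lemma hom_lclosed d : lclosed (ghom e d).
Proof. exact: (lclosed_eik e (fun i k : 'I_n.+1 => (k%:Z - i%:Z != d))). Qed.
Lemma lowp_lclosed : lclosed (lowp e).
Proof. exact: (lclosed_eik e (fun i k : 'I_n.+1 => (i <= k)%N)). Qed.

Lemma lclosedB (P : A -> Prop) x y : lclosed P -> P x -> P y -> P (x - y).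
Proof.
case=> _ PD PZ Px Py; apply: PD => //; rewrite -scaleN1r; exact: PZ.
Qed.

Lemma B1 : 1 \in B. Proof. by case: HNg => [[]]. Qed.
Lemma BM x y : x \in B -> y \in B -> x * y \in B.
Proof. case: HNg => [[_ /prodvP HBB] _ _]; exact: HBB. Qed.

Lemma B_up0 x : x \in B -> up e 0 x.
Proof.
case: HNg => [_ Hgr Hneg]; rewrite Hgr.
apply: (lclosed_sumv (up_lclosed 0)) => j y _ Hy.
have [Hj|Hj] := ltnP j n.
  have Hz : (j%:Z - n%:Z < 0) by lia.
  move: Hy; rewrite Hneg // memv0 => /eqP -> i k _; by rewrite mulr0 mul0r.
move/memv_capP: Hy => [_ /(grpieceP He) Hy].
move=> i k Hk; apply: Hy; apply/eqP => E; lia.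
Qed.

Lemma Bp_B : (Bp <= B)%VS.
Proof. by apply/subv_sumP => j _; rewrite capvSl. Qed.
Lemma H_B : (H <= B)%VS.
Proof. exact: capvSl. Qed.

Lemma Bp_up1 x : x \in Bp -> up e 1 x.
Proof.
apply: (lclosed_sumv (up_lclosed 1)) => j y _ /memv_capP [_ /(grpieceP He) Hy].
apply: (upW (d := j.+1)) => //; exact: hom_up Hy.
Qed.

Lemma H_hom0 x : x \in H -> ghom e 0 x.
Proof. by case/memv_capP => _ /(grpieceP He). Qed.

Lemma Am_low x : x \in Aminus e -> lowp e x.
Proof.
apply: (lclosed_sumv lowp_lclosed) => j y _ /(grpieceP He) Hy.
exact: hom_neg Hy.
Qed.

Lemma B_dec : (B <= H + Bp)%VS.
Proof.
case: HNg => [_ Hgr Hneg]; rewrite {1}Hgr.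
apply/subv_sumP => j _.
have [Hj|Hj] := ltnP j n.
  by rewrite Hneg ?sub0v //; lia.
have [Ejn|Hjn] := eqVneq (j : nat) n.
  by apply: subv_trans (addvSl _ _); rewrite Ejn subrr.
apply: subv_trans (addvSr _ _).
have Hk : (j - n - 1 < n)%N by have := ltn_ord j; lia.
apply: (sumv_sup (Ordinal Hk)) => //=.
have -> : j%:Z - n%:Z = (j - n - 1).+1%:Z by lia.
by [].
Qed.

Lemma B_eq : (H + Bp)%VS = B.
Proof. by apply/eqP; rewrite eqEsubv B_dec subv_add H_B Bp_B. Qed.

Lemma hom0_up1 x : ghom e 0 x -> up e 1 x -> x = 0.
Proof.
move=> H0 H1; apply: (eq0_decomp He) => i k.
have [<-|Hik] := eqVneq i k; first by apply: H1; rewrite addn1.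
by apply: H0; rewrite subr_eq0 eqz_nat eq_sym.
Qed.

Lemma upB1_Bp x : x \in B -> up e 1 x -> x \in Bp.
Proof.
move=> /(subvP B_dec) /memv_addP [h Hh [p Hp Hx]] Hu.
have : h = 0.
  apply: hom0_up1; first exact: H_hom0.
  have -> : h = x - p by rewrite Hx addrK.
  by apply: lclosedB (up_lclosed 1) Hu (Bp_up1 Hp).
by move=> Hh0; rewrite Hx Hh0 add0r.
Qed.

Lemma HcapBp : (H :&: Bp)%VS = 0%VS.
Proof.
apply/eqP; rewrite -subv0; apply/subvP => x /memv_capP [Hx Hp].
by rewrite memv0 (hom0_up1 (H_hom0 Hx) (Bp_up1 Hp)).
Qed.

Lemma homB0 x : x \in B -> ghom e 0 x -> x \in H.
Proof. by move=> Hx Hh; rewrite memv_cap Hx; apply/(homP He). Qed.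

Lemma H1 : 1 \in H.
Proof. by apply: homB0; [exact: B1 | exact: one_hom0]. Qed.

Lemma HM x y : x \in H -> y \in H -> x * y \in H.
Proof.
move=> Hx Hy; apply: homB0; first by apply: BM; apply: (subvP H_B).
by have := homM He (H_hom0 Hx) (H_hom0 Hy); rewrite addr0.
Qed.

Lemma BBp x y : x \in B -> y \in Bp -> x * y \in Bp.
Proof.
move=> Hx Hy; apply: upB1_Bp; first by apply: BM => //; apply: (subvP Bp_B).
by have := upM He (B_up0 Hx) (Bp_up1 Hy); rewrite add0n.
Qed.

Lemma BpB x y : x \in Bp -> y \in B -> x * y \in Bp.
Proof.
move=> Hx Hy; apply: upB1_Bp; first by apply: BM => //; apply: (subvP Bp_B).
by have := upM He (Bp_up1 Hx) (B_up0 Hy); rewrite addn0.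
Qed.

Lemma Bp_nil p : p \in Bp -> p ^+ n.+1 = 0.
Proof.
move=> Hp; apply: (up_top He).
elim: n.+1 => [|k IH]; first by rewrite expr0; apply: B_up0; exact: B1.
by rewrite exprS; have := upM He (Bp_up1 Hp) IH; rewrite add1n.
Qed.

Lemma BX x k : x \in B -> x ^+ k \in B.
Proof.
move=> Hx; elim: k => [|k IH]; first by rewrite expr0 B1.
by rewrite exprS BM.
Qed.

Lemma jacobson x : x \in Bp -> in_jacobson B x.
Proof.
move=> Hx; split; first exact: (subvP Bp_B).
move=> I [[IB /prodvP BI] INB Hmax].
have HI' : left_ideal B (I + Bp)%VS.
  split; first by rewrite subv_add IB Bp_B.
  apply/prodvP => b y Hb /memv_addP [i Hi [p Hp ->]].
  by rewrite mulrDr memv_add ?BI ?BBp.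
case: (Hmax _ HI' (addvSl _ _)) => [EI|EB].
  by rewrite -EI (subvP (addvSr _ _)).
have : 1 \in (I + Bp)%VS by rewrite EB B1.
case/memv_addP => i Hi [p Hp E1].
pose q := \sum_(k < n.+1) p ^+ k.
have Hq : q \in B.
  by apply: rpred_sum => k _; apply: BX; apply: (subvP Bp_B).
have Hqi : q * i = 1.
  have -> : i = 1 - p by rewrite E1 addrK.
  have Hc : GRing.comm q (1 - p).
    apply: commr_sym; apply: commr_sum => k _; apply: commrX.
    by apply: commr_sym; apply: commrB; [apply: commr1 | apply: commr_refl].
  rewrite Hc -opprB mulNr -subrX1 Bp_nil // sub0r opprK.
  by [].
have I1 : 1 \in I by rewrite -Hqi BI.
case/negP: INB; rewrite eqEsubv IB /=; apply/subvP => b Hb.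
by rewrite -[b]mulr1 BI.
Qed.

End BStruct.

Section Reps.
Variables (F : fieldType) (A : falgType F).

Section OneRep.
Variables (S : {vspace A}) (m : nat) (rho : A -> 'M[F]_m).
Hypothesis Hr : is_rep S rho.

Lemma rep1 : rho 1 = 1%:M. Proof. by case: Hr. Qed.
Lemma repD : {in S &, forall a b, rho (a + b) = rho a + rho b}.
Proof. by case: Hr. Qed.
Lemma repZ : {in S, forall a (c : F), rho (c *: a) = c *: rho a}.
Proof. by case: Hr. Qed.
Lemma repM : {in S &, forall a b, rho (a * b) = rho b *m rho a}.
Proof. by case: Hr. Qed.
Lemma rep0 : rho 0 = 0.
Proof.
have := repD (mem0v S) (mem0v S); rewrite addr0.
by move/(congr1 (fun M => M - rho 0)); rewrite subrr addrK => <-.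
Qed.

Lemma rep_sum (I : Type) (r : seq I) (P : pred I) (f : I -> A) :
  (forall i, P i -> f i \in S) -> rho (\sum_(i <- r | P i) f i) = \sum_(i <- r | P i) rho (f i).
Proof.
move=> Hf; elim: r => [|i r IH]; first by rewrite !big_nil rep0.
rewrite !big_cons; case: ifP => Pi //.
rewrite repD ?IH //; first exact: Hf.
by apply: rpred_sum => j Pj; apply: Hf.
Qed.

Lemma rep_lin k (c : 'I_k -> F) (b : 'I_k -> A) :
  (forall i, b i \in S) -> rho (\sum_(i < k) c i *: b i) = \sum_(i < k) c i *: rho (b i).
Proof.
move=> Hb; rewrite rep_sum => [|i _]; last by rewrite rpredZ.
by apply: eq_bigr => i _; rewrite repZ.
Qed.

Definition orb (u : 'rV[F]_m) : 'M[F]_(\dim S, m) :=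
  \matrix_(j < \dim S) (u *m rho (vbasis S)`_j).

Lemma vbS (j : 'I_(\dim S)) : (vbasis S)`_j \in S.
Proof. by apply: vbasis_mem; apply: mem_nth; rewrite size_tuple. Qed.

Lemma orb_comb u (D : 'rV[F]_(\dim S)) :
  D *m orb u = u *m rho (\sum_(j < \dim S) D 0 j *: (vbasis S)`_j).
Proof.
rewrite mulmx_sum_row rep_lin; last exact: vbS.
rewrite mulmx_sumr; apply: eq_bigr => j _; by rewrite rowK scalemxAr.
Qed.

Lemma orb_mem u x : x \in S -> (u *m rho x <= orb u)%MS.
Proof.
move=> Hx; apply/submxP; exists (\row_j coord (vbasis S) j x).
rewrite orb_comb; congr (_ *m rho _); rewrite {1}(coord_vbasis Hx).
by apply: eq_bigr => j _; rewrite mxE.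
Qed.

Lemma orb_inv u (y : 'rV[F]_m) : (y <= orb u)%MS -> exists2 x, x \in S & y = u *m rho x.
Proof.
case/submxP => D ->; rewrite orb_comb; eexists; last by [].
by apply: rpred_sum => j _; rewrite rpredZ // vbS.
Qed.

Hypothesis HS : is_subalg S.

Lemma SM x y : x \in S -> y \in S -> x * y \in S.
Proof. by case: HS => _ /prodvP; apply. Qed.
Lemma S1 : 1 \in S. Proof. by case: HS. Qed.

Lemma orb_stable u : stable S rho <<orb u>>%MS.
Proof.
move=> s Hs; rewrite (eqmxMr _ (genmxE _)) genmxE; apply/row_subP => j.
rewrite row_mul rowK -mulmxA -repM ?vbS //; apply: orb_mem.
by apply: SM => //; exact: vbS.
Qed.

Lemma orb_full u : simple_sub S rho 1%:M -> u != 0 ->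
  forall y : 'rV[F]_m, exists2 x, x \in S & y = u *m rho x.
Proof.
case=> _ _ Hsim Hu y; apply: orb_inv.
case: (Hsim _ (orb_stable u) (submx1 _)) => [H0|H1].
  case/negP: Hu; have := orb_mem u S1; rewrite rep1 mulmx1 -(genmxE (orb u)) H0.
  by rewrite submx0.
by rewrite -(genmxE (orb u)); apply: submx_trans (submx1 _) _; case/andP: H1.
Qed.

End OneRep.

Lemma sub_bigcap_seq m k (U : 'M[F]_(k, m)) (s : seq A) (f : A -> 'M[F]_m) :
  (U <= \bigcap_(b <- s) f b)%MS = all (fun b => U <= f b)%MS s.
Proof.
elim: s => [|b s IH]; first by rewrite big_nil submx1.
by rewrite big_cons sub_capmx IH.
Qed.

Lemma fixspP (Bp : {vspace A}) m (rho : A -> 'M[F]_m) k (U : 'M[F]_(k, m)) :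
  is_rep fullv rho ->
  reflect (forall p, p \in Bp -> U *m rho p = 0) (U <= fixsp Bp rho)%MS.
Proof.
move=> Hr; rewrite /fixsp sub_bigcap_seq.
apply: (iffP allP) => [H p Hp|H b Hb]; last by rewrite sub_kermx H ?vbasis_mem.
rewrite (coord_vbasis Hp) (rep_lin Hr) => [|i]; last exact: memvf.
rewrite mulmx_sumr big1 // => i _; rewrite -scalemxAr.
have /H : (vbasis Bp)`_i \in vbasis Bp by apply: mem_nth; rewrite size_tuple.
by rewrite sub_kermx => /eqP ->; rewrite scaler0.
Qed.

End Reps.

Lemma nz_row (F : fieldType) m k (V : 'M[F]_(k, m)) : V != 0 -> exists i, row i V != 0.
Proof.
move=> HV; apply/existsP; apply: contraR HV => /existsPn Hr.
apply/eqP/row_matrixP => i; rewrite row0; exact/eqP/negbNE/Hr.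
Qed.

Lemma nz_vec (F : fieldType) m k (M : 'M[F]_(m, k)) : M != 0 -> exists y : 'rV_m, y *m M != 0.
Proof.
move=> /nz_row [i Hi]; exists (delta_mx 0 i); by rewrite -rowE.
Qed.

Section Modules.
Variables (F : fieldType) (A : falgType F) (n : nat) (e : 'I_n.+1 -> A) (B : {vspace A}).
Hypothesis He : idem_decomp e.
Hypothesis HNg : Ngraded_subalg e B.
Hypothesis Hc : complete e B.

Local Notation H := (Bzero e B).
Local Notation Bp := (Bplus e B).

Lemma B_split x : x \in B -> exists2 h, h \in H & exists2 p, p \in Bp & x = h + p.
Proof. by move=> Hx; apply/memv_addP; rewrite (B_eq HNg). Qed.

Section Rep.
Variables (m : nat) (rho : A -> 'M[F]_m).
Hypothesis Hr : is_rep fullv rho.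

Lemma rM a b : rho (a * b) = rho b *m rho a.
Proof. by apply: (repM Hr); apply: memvf. Qed.
Lemma rD a b : rho (a + b) = rho a + rho b.
Proof. by apply: (repD Hr); apply: memvf. Qed.
Lemma rZ (c : F) a : rho (c *: a) = c *: rho a.
Proof. by apply: (repZ Hr); apply: memvf. Qed.
Lemma r0 : rho 0 = 0. Proof. exact: rep0 Hr. Qed.
Lemma r1 : rho 1 = 1%:M. Proof. exact: rep1 Hr. Qed.

Lemma rlclosed k (v : 'M[F]_(k, m)) (f : A -> A) :
  (forall x y, f (x + y) = f x + f y) -> (forall (c : F) x, f (c *: x) = c *: f x) ->
  lclosed (fun x => v *m rho (f x) = 0).
Proof.
move=> fD fZ; split=> [|x y Hx Hy|c x Hx].
- have := fZ 0 0; rewrite !scale0r => ->; by rewrite r0 mulmx0.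
- by rewrite fD rD mulmxDr Hx Hy addr0.
- by rewrite fZ rZ -scalemxAr Hx scaler0.
Qed.

Lemma fix_kill k (v : 'M[F]_(k, m)) p : (v <= fixsp Bp rho)%MS -> p \in Bp -> v *m rho p = 0.
Proof. by move/(fixspP Bp v Hr); apply. Qed.

Lemma fix_Hstable : stable H rho (fixsp Bp rho).
Proof.
move=> h Hh; apply/(fixspP Bp _ Hr) => p Hp.
rewrite -mulmxA -rM; apply: fix_kill => //; apply: (BpB He HNg) => //.
exact: (subvP (H_B e B)).
Qed.

Definition deg k (v : 'M[F]_(k, m)) i := v *m rho (e i) = v.

Lemma deg_h k (v : 'M[F]_(k, m)) i h : deg v i -> h \in H ->
  forall l, v *m rho h *m rho (e l) = if l == i then v *m rho h else 0.
Proof.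
move=> Hv Hh l; have H0 := H_hom0 He Hh.
rewrite -{1}Hv -!mulmxA -!rM.
have [->|Hli] := eqVneq l i; first by rewrite (hom_e He _ H0) rM mulmxA Hv.
by rewrite H0 ?r0 ?mulmx0 // subr_eq0 eqz_nat eq_sym.
Qed.

Lemma deg_hdeg k (v : 'M[F]_(k, m)) i h : deg v i -> h \in H -> deg (v *m rho h) i.
Proof. by move=> Hv Hh; rewrite /deg (deg_h Hv Hh) eqxx. Qed.

Lemma keyK_loc h p c : h \in H -> p \in Bp -> c \in (Aminus e * B)%VS ->
  forall k (v : 'M[F]_(k, m)) i,
  (v <= fixsp Bp rho)%MS -> deg v i ->
  v *m rho (h + p + c) *m rho (e i) = v *m rho h /\
  forall l : 'I_n.+1, (l < i)%N -> v *m rho (h + p + c) *m rho (e l) = 0.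
Proof.
move=> Hh Hp Hcm k v i Hv Hd.
have Hc0 : forall l : 'I_n.+1, (l <= i)%N -> v *m rho c *m rho (e l) = 0.
  move=> l Hl; rewrite -mulmxA -rM.
  have Pc := rlclosed v (f := fun c => e l * c) (mulrDr _) (fun c x => esym (scalerAr _ _ _)).
  apply: (lclosed_prodv Pc) Hcm => a b' Ha Hb'.
  have [h' Hh' [p' Hp' ->]] := B_split Hb'.
  rewrite mulrA rM rD mulmxA mulmxDr (fix_kill Hv Hp') addr0.
  rewrite -{1}Hd -!mulmxA -!rM -mulrA -(hom0_comm He i (H_hom0 He Hh')) mulrA.
  have -> : e l * a * e i = 0 by apply: (Am_low He).
  by rewrite mul0r r0 mulmx0.
split=> [|l Hl]; rewrite !rD !mulmxDr (fix_kill Hv Hp) addr0 !mulmxDl.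
  by rewrite Hc0 // addr0 (deg_h Hd Hh) eqxx.
rewrite (Hc0 _ (ltnW Hl)) addr0 (deg_h Hd Hh); case: eqP => // Eli.
by rewrite Eli ltnn in Hl.
Qed.

End Rep.

Lemma keyK x : exists2 h, h \in H & forall m (rho : A -> 'M[F]_m), is_rep fullv rho ->
  forall k (v : 'M[F]_(k, m)) i,
  (v <= fixsp Bp rho)%MS -> deg rho v i ->
  v *m rho x *m rho (e i) = v *m rho h /\
  forall l : 'I_n.+1, (l < i)%N -> v *m rho x *m rho (e l) = 0.
Proof.
case: Hc => Hfull _.
have /memv_addP [b Hb [c Hcm ->]] : x \in (B + Aminus e * B)%VS by rewrite Hfull memvf.
have [h Hh [p Hp ->]] := B_split Hb.
exists h => // m rho Hr; exact: (keyK_loc Hr Hh Hp Hcm).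
Qed.

End Modules.

Lemma full_subalg (F : fieldType) (A : falgType F) : is_subalg (fullv : {vspace A}).
Proof. by split; [exact: memvf | exact: subvf]. Qed.

Section Simple.
Variables (F : fieldType) (A : falgType F) (n : nat) (e : 'I_n.+1 -> A) (B : {vspace A}).
Hypothesis He : idem_decomp e.
Hypothesis HNg : Ngraded_subalg e B.
Hypothesis Hc : complete e B.

Local Notation H := (Bzero e B).
Local Notation Bp := (Bplus e B).

Lemma p_ei_low p i : p \in Bp ->
  p * e i = \sum_(l < n.+1 | (l < i)%N) e l * p * e i.
Proof.
move=> Hp; rewrite (rsum He) (bigID (fun l : 'I_n.+1 => (l < i)%N)) /=.
rewrite [X in _ + X]big1 ?addr0 // => l; rewrite -leqNgt => Hl.
by apply: (Bp_up1 He Hp); rewrite addn1 ltnS.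
Qed.

Section Rep.
Variables (m : nat) (rho : A -> 'M[F]_m).
Hypothesis Hr : is_rep fullv rho.
Hypothesis Hs : simple_sub fullv rho 1%:M.

Local Notation rM := (rM Hr).
Local Notation rD := (rD Hr).
Local Notation rZ := (rZ Hr).
Local Notation r0 := (r0 Hr).
Local Notation r1 := (r1 Hr).

Lemma fix_proj k (u : 'M[F]_(k, m)) i : (u <= fixsp Bp rho)%MS ->
  (u *m rho (e i) <= fixsp Bp rho)%MS.
Proof.
move=> Hu; apply/(fixspP Bp _ Hr) => p Hp; rewrite -mulmxA -rM.
have Pc := rlclosed Hr u (f := fun p => p * e i) (fun x y => mulrDl x y (e i))
  (fun c x => esym (scalerAl _ _ _)).
apply: (lclosed_sumv Pc) Hp => j q _ Hq /=.
have Hq' : q \in Bp by apply: (sumv_sup j) Hq.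
move/memv_capP: Hq => [_ /(grpieceP He) Hq].
case: (hom_shift He i Hq) => [->|[l ->]]; first by rewrite r0 mulmx0.
by rewrite rM mulmxA (fix_kill Hr Hu Hq') mul0mx.
Qed.

Lemma simple_deg : exists i0 : 'I_n.+1,
  [/\ rho (e i0) != 0, forall k : 'I_n.+1, (k < i0)%N -> rho (e k) = 0 &
      forall u : 'rV[F]_m, (u <= fixsp Bp rho)%MS -> deg e rho u i0].
Proof.
have Hex : exists j, (j < n.+1)%N && (rho (e (inord j)) != 0).
  case: (pickP (fun i : 'I_n.+1 => rho (e i) != 0)) => [i Hi|Hall].
    by exists i; rewrite ltn_ord inord_val.
  have : (1%:M : 'M[F]_m) != 0 by case: Hs.
  rewrite -r1 -(esum He) (rep_sum Hr) => [|i _]; last exact: memvf.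
  by rewrite big1 ?eqxx // => i _; move: (Hall i) => /negbFE/eqP.
case: (ex_minnP Hex) => j /andP [Hj Hnz] Hmin.
set i0 := Ordinal Hj.
have Ei0 : e (inord j) = e i0 by rewrite (_ : inord j = i0) //; apply: val_inj; rewrite /= inordK.
rewrite Ei0 in Hnz.
have Hlow : forall k : 'I_n.+1, (k < i0)%N -> rho (e k) = 0.
  move=> k Hk; apply/eqP; apply: contraTT Hk => Hk; rewrite -leqNgt.
  by apply: Hmin; rewrite ltn_ord /= inord_val.
exists i0; split => // u Hu.
rewrite /deg.
have Hsum : u = \sum_(i < n.+1) u *m rho (e i).
  rewrite -mulmx_sumr -(rep_sum Hr) => [|i _]; last exact: memvf.
  by rewrite (esum He) r1 mulmx1.
rewrite [RHS]Hsum (bigD1 i0) //= big1 ?addr0 // => i Hi.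
have [Hlt|Hgt] := ltnP i i0; first by rewrite Hlow // mulmx0.
have Hgt' : (i0 < i)%N by rewrite ltn_neqAle Hgt andbT; apply: contra Hi => /eqP E; apply/eqP/val_inj.
set w := u *m rho (e i).
have Hw : (w <= fixsp Bp rho)%MS by apply: fix_proj.
have Hdw : deg e rho w i by rewrite /deg /w -mulmxA -rM (eMe He).
apply/eqP; apply: contraTT isT => Hw0.
have [y Hy] := nz_vec Hnz.
have [x _ Ey] := orb_full Hr (full_subalg A) Hs Hw0 y.
case: (keyK He HNg Hc x) => h _ /(_ _ _ Hr _ w i Hw Hdw) [_ /(_ i0 Hgt')].
by rewrite -Ey => E; rewrite E eqxx in Hy.
Qed.

Lemma fix_nz : fixsp Bp rho != 0.
Proof.
have [i0 [Hnz Hlow _]] := simple_deg.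
have [y Hy] := nz_vec Hnz.
apply: contraNneq Hy => H0; rewrite -submx0 -H0.
apply/(fixspP Bp _ Hr) => p Hp; rewrite -mulmxA -rM (p_ei_low i0 Hp).
rewrite (rep_sum Hr) => [|l _]; last exact: memvf.
rewrite mulmx_sumr big1 // => l Hl; by rewrite !rM (Hlow l Hl) !mulmx0.
Qed.

Lemma fix_gen (u w : 'rV[F]_m) : (u <= fixsp Bp rho)%MS -> (w <= fixsp Bp rho)%MS ->
  w != 0 -> exists2 h, h \in H & u = w *m rho h.
Proof.
move=> Hu Hw Hw0; have [i0 [_ _ Hdeg]] := simple_deg.
have [x _ Ex] := orb_full Hr (full_subalg A) Hs Hw0 u.
case: (keyK He HNg Hc x) => h Hh /(_ _ _ Hr _ w i0 Hw (Hdeg _ Hw)) [E _].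
by exists h => //; rewrite -E -Ex Hdeg.
Qed.

Lemma part_a : simple_sub H rho (fixsp Bp rho).
Proof.
split; [exact: (fix_Hstable He HNg Hr) | exact: fix_nz |] => V HV HVf.
have [->|HV0] := eqVneq V 0; first by left.
right; rewrite /eqmx HVf /=.
have [r Hr0] := nz_row HV0.
have HrV : (row r V <= V)%MS by rewrite row_sub.
apply/row_subP => j.
have [h Hh ->] := fix_gen (row_sub j _) (submx_trans HrV HVf) Hr0.
by apply: submx_trans (HV h Hh); rewrite submxMr.
Qed.

End Rep.
End Simple.

Section Transport.
Variables (F : fieldType) (A : falgType F).

Lemma rep_sub (S T : {vspace A}) m (rho : A -> 'M[F]_m) :
  (T <= S)%VS -> is_rep S rho -> is_rep T rho.
Proof.
move=> /subvP HTS [H1 HD HZ HM]; split=> //.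
- by move=> a b /HTS Ha /HTS Hb; apply: HD.
- by move=> a /HTS Ha; apply: HZ.
- by move=> a b /HTS Ha /HTS Hb; apply: HM.
Qed.

Lemma orb_coord (S : {vspace A}) m (rho : A -> 'M[F]_m) (Hr : is_rep S rho) u x :
  x \in S -> \row_j coord (vbasis S) j x *m orb S rho u = u *m rho x.
Proof.
move=> Hx; rewrite (orb_comb Hr); congr (_ *m rho _); rewrite [RHS](coord_vbasis Hx).
by apply: eq_bigr => j _; rewrite mxE.
Qed.

Lemma transport (S : {vspace A}) m1 m2 (rho1 : A -> 'M[F]_m1) (rho2 : A -> 'M[F]_m2)
  (Hr1 : is_rep S rho1) (Hr2 : is_rep S rho2) (w1 : 'rV_m1) (w2 : 'rV_m2) :
  (forall x, x \in S -> w1 *m rho1 x = 0 -> w2 *m rho2 x = 0) ->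
  exists g : 'M[F]_(m1, m2), forall x, x \in S -> w1 *m rho1 x *m g = w2 *m rho2 x.
Proof.
move=> Hker.
set M1 := orb S rho1 w1; set M2 := orb S rho2 w2.
have Hk : forall c : 'rV_(\dim S), c *m M1 = 0 -> c *m M2 = 0.
  move=> c; rewrite /M1 /M2 !(orb_comb Hr1, orb_comb Hr2); apply: Hker.
  by apply: rpred_sum => j _; rewrite rpredZ // vbS.
exists (pinvmx M1 *m M2) => x Hx.
rewrite -(orb_coord Hr1) // -(orb_coord Hr2) //; set c := \row_j _.
have Ht : (c *m M1 *m pinvmx M1 - c) *m M1 = 0.
  by rewrite mulmxBl mulmxKpV ?submxMl // subrr.
have := Hk _ Ht; rewrite mulmxBl mulmxA => /eqP; rewrite subr_eq0 => /eqP.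
by rewrite -mulmxA.
Qed.

End Transport.

Section PartB.
Variables (F : fieldType) (A : falgType F) (n : nat) (e : 'I_n.+1 -> A) (B : {vspace A}).
Hypothesis He : idem_decomp e.
Hypothesis HNg : Ngraded_subalg e B.
Hypothesis Hc : complete e B.

Local Notation H := (Bzero e B).
Local Notation Bp := (Bplus e B).

Lemma part_b_fwd m1 (rho1 : A -> 'M[F]_m1) m2 (rho2 : A -> 'M[F]_m2) :
  is_rep fullv rho1 -> is_rep fullv rho2 ->
  iso_sub fullv rho1 1%:M rho2 1%:M ->
  iso_sub H rho1 (fixsp Bp rho1) rho2 (fixsp Bp rho2).
Proof.
move=> Hr1 Hr2 [f []]; rewrite !mul1mx => /andP [_ Hfull] Hrk Hint.
rewrite sub1mx in Hfull.
have Hfree : row_free f by rewrite /row_free Hrk mxrank1.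
have Hint' : forall s, rho1 s *m f = f *m rho2 s.
  by move=> s; have := Hint s (memvf s); rewrite !mul1mx.
exists f; split.
- apply/andP; split.
    apply/(fixspP Bp _ Hr2) => p Hp.
    by rewrite -mulmxA -Hint' mulmxA (fix_kill Hr1 (submx_refl _) Hp) mul0mx.
  set X := fixsp Bp rho2 *m pinvmx f.
  have HX : X *m f = fixsp Bp rho2 by rewrite mulmxKpV // submx_full.
  rewrite -HX submxMr //; apply/(fixspP Bp _ Hr1) => p Hp.
  apply/eqP; rewrite -(mulmx_free_eq0 _ Hfree) -mulmxA Hint' mulmxA HX.
  by rewrite (fix_kill Hr2 (submx_refl _) Hp).
- exact: mxrankMfree.
- by move=> s _; rewrite -!mulmxA Hint'.
Qed.

Lemma part_b_bwd m1 (rho1 : A -> 'M[F]_m1) m2 (rho2 : A -> 'M[F]_m2) :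
  is_rep fullv rho1 -> simple_sub fullv rho1 1%:M ->
  is_rep fullv rho2 -> simple_sub fullv rho2 1%:M ->
  iso_sub H rho1 (fixsp Bp rho1) rho2 (fixsp Bp rho2) ->
  iso_sub fullv rho1 1%:M rho2 1%:M.
Proof.
move=> Hr1 Hs1 Hr2 Hs2 [f [/andP [Hf1 _] Hrk Hint]].
set U1 := fixsp Bp rho1; set U2 := fixsp Bp rho2.
have [r Hr0] := nz_row (fix_nz He HNg Hc Hr1 Hs1).
set w := row r U1.
have Hw : (w <= U1)%MS by apply: row_sub.
have Hcap : (U1 :&: kermx f)%MS = 0.
  apply/eqP; rewrite -mxrank_eq0; have := mxrank_mul_ker U1 f.
  by rewrite Hrk => /eqP; rewrite -{2}[\rank U1]addn0 eqn_add2l.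
have Hwf0 : w *m f != 0.
  apply: contra Hr0 => /eqP Hwf; rewrite -submx0 -Hcap sub_capmx Hw /=.
  by rewrite sub_kermx Hwf.
have Hwf : (w *m f <= U2)%MS by apply: submx_trans Hf1; rewrite submxMr.
have HintH : forall h, h \in H -> w *m rho1 h *m f = w *m f *m rho2 h.
  move=> h Hh; have E := Hint h Hh; rewrite -!mulmxA in E.
  by case/submxP: Hw => D ->; rewrite -!mulmxA E.
have [i1 [_ _ Hd1]] := simple_deg He HNg Hc Hr1 Hs1.
have [i2 [_ _ Hd2]] := simple_deg He HNg Hc Hr2 Hs2.
have Hw0 : w != 0 by [].
have Hk12 : forall x, x \in fullv -> w *m rho1 x = 0 -> w *m f *m rho2 x = 0.
  move=> x _ Hx; apply/eqP; apply: contraT => Hx2.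
  have [x' _ Ex'] := orb_full Hr2 (full_subalg A) Hs2 Hx2 (w *m f).
  case: (keyK He HNg Hc (x' * x)) => h Hh Hkey.
  have [E1 _] := Hkey _ _ Hr1 _ w i1 Hw (Hd1 _ Hw).
  have [E2 _] := Hkey _ _ Hr2 _ (w *m f) i2 Hwf (Hd2 _ Hwf).
  rewrite (rM Hr1) mulmxA Hx !mul0mx in E1.
  rewrite (rM Hr2) mulmxA -Ex' (Hd2 _ Hwf) -HintH // -E1 mul0mx in E2.
  by rewrite E2 eqxx in Hwf0.
have Hk21 : forall x, x \in fullv -> w *m f *m rho2 x = 0 -> w *m rho1 x = 0.
  move=> x _ Hx; apply/eqP; apply: contraT => Hx1.
  have [x' _ Ex'] := orb_full Hr1 (full_subalg A) Hs1 Hx1 w.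
  case: (keyK He HNg Hc (x' * x)) => h Hh Hkey.
  have [E1 _] := Hkey _ _ Hr1 _ w i1 Hw (Hd1 _ Hw).
  have [E2 _] := Hkey _ _ Hr2 _ (w *m f) i2 Hwf (Hd2 _ Hwf).
  rewrite (rM Hr1) mulmxA -Ex' (Hd1 _ Hw) in E1.
  rewrite (rM Hr2) mulmxA Hx !mul0mx -HintH // -E1 in E2.
  by rewrite -E2 eqxx in Hwf0.
have [g Hg] := transport Hr1 Hr2 Hk12.
have Hgen1 := orb_full Hr1 (full_subalg A) Hs1 Hw0.
have Hgen2 := orb_full Hr2 (full_subalg A) Hs2 Hwf0.
exists g; split.
- rewrite mul1mx; apply/andP; split; first exact: submx1.
  apply/row_subP => r'; rewrite row1.
  have [x _ ->] := Hgen2 (delta_mx 0 r').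
  by rewrite -Hg ?memvf // submxMl.
- rewrite mul1mx mxrank1; apply/eqP; rewrite -/(row_free g) -kermx_eq0.
  apply/eqP/row_matrixP => r'; rewrite row0.
  have Hy : row r' (kermx g) *m g = 0 by apply/sub_kermxP; rewrite row_sub.
  have [x _ Ex] := Hgen1 (row r' (kermx g)).
  by rewrite Ex Hk21 ?memvf // -Hg ?memvf // -Ex.
- move=> s _; rewrite !mul1mx; apply/row_matrixP => r'; rewrite !rowE !mulmxA.
  have [x _ ->] := Hgen1 (delta_mx 0 r').
  by rewrite -[w *m rho1 x *m rho1 s]mulmxA -(rM Hr1) !Hg ?memvf // (rM Hr2) mulmxA.
Qed.

End PartB.

Section Quot.
Variables (F : fieldType) (A : falgType F) (I : {vspace A}).
Hypothesis HI : (fullv * I <= I)%VS.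

Definition qC := (I^C)%VS.
Definition qm := \dim qC.
Definition qpi := daddv_pi qC I.
Definition Q (x : A) : 'rV[F]_qm := \row_j coord (vbasis qC) j (qpi x).
Definition lift (y : 'rV[F]_qm) : A := \sum_(i < qm) y 0 i *: (vbasis qC)`_i.
Definition qrho (a : A) : 'M[F]_qm := \matrix_(i < qm) Q (a * (vbasis qC)`_i).

Lemma QD x y : Q (x + y) = Q x + Q y.
Proof. by apply/rowP => j; rewrite !mxE !linearD. Qed.
Lemma QZ (c : F) x : Q (c *: x) = c *: Q x.
Proof. by apply/rowP => j; rewrite !mxE !linearZ. Qed.
Lemma QN x : Q (- x) = - Q x.
Proof. by rewrite -scaleN1r QZ scaleN1r. Qed.
Lemma QB x y : Q (x - y) = Q x - Q y.
Proof. by rewrite QD QN. Qed.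
Lemma Q0 : Q 0 = 0.
Proof. by rewrite -(scale0r 0) QZ scale0r. Qed.
Lemma Qsum (J : Type) (r : seq J) (P : pred J) (f : J -> A) :
  Q (\sum_(j <- r | P j) f j) = \sum_(j <- r | P j) Q (f j).
Proof. exact: (big_morph Q QD Q0). Qed.

Lemma qcap : (qC :&: I = 0)%VS.
Proof. by rewrite capvC capv_compl. Qed.

Lemma qpi_add x : qpi x + daddv_pi I qC x = x.
Proof. by apply: daddv_pi_add qcap _; rewrite addvC addv_complf memvf. Qed.

Lemma qpiI x : x \in I -> qpi x = 0.
Proof.
move=> Hx; have := qpi_add x; rewrite (daddv_pi_id _ Hx); last by rewrite capv_compl.
by move/(congr1 (fun y => y - x)); rewrite addrK subrr.
Qed.

Lemma QI x : x \in I -> Q x = 0.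
Proof. by move=> Hx; apply/rowP => j; rewrite !mxE qpiI // linear0. Qed.

Lemma lift_qpi x : lift (Q x) = qpi x.
Proof.
rewrite [RHS](coord_vbasis (memv_pi _ _ _)); apply: eq_bigr => i _.
by rewrite mxE.
Qed.

Lemma lift_dec x : x - lift (Q x) \in I.
Proof.
rewrite lift_qpi -{1}(qpi_add x) addrC addKr; exact: memv_pi.
Qed.

Lemma Q_eq0 x : Q x = 0 -> x \in I.
Proof.
move=> H0; have := lift_dec x; rewrite H0.
by rewrite /lift big1 ?subr0 // => i _; rewrite mxE scale0r.
Qed.

Lemma Qbas (i : 'I_qm) : Q (vbasis qC)`_i = delta_mx 0 i.
Proof.
apply/rowP => j; rewrite !mxE daddv_pi_id ?qcap //; last exact: vbS.
rewrite coord_free; last exact: basis_free (vbasisP _).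
by rewrite eqxx /= eq_sym.
Qed.

Lemma Qlift y : Q (lift y) = y.
Proof.
rewrite Qsum [RHS]row_sum_delta; apply: eq_bigr => i _; by rewrite QZ Qbas.
Qed.

Lemma QM a x : Q (a * x) = Q x *m qrho a.
Proof.
have Ha : a * (x - lift (Q x)) \in I.
  by apply: (subvP HI); apply: memv_mul; [exact: memvf | exact: lift_dec].
rewrite -[LHS]subr0 -(QI Ha) -QB mulrBr opprB addrC subrK.
rewrite mulmx_sum_row /lift mulr_sumr Qsum; apply: eq_bigr => i _.
by rewrite rowK -scalerAr QZ.
Qed.

Lemma qrho_rep : is_rep fullv qrho.
Proof.
split.
- apply/row_matrixP => i; by rewrite rowK mul1r Qbas row1.
- move=> a b _ _; apply/row_matrixP => i; by rewrite linearD /= !rowK mulrDl QD.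
- move=> a _ c; apply/row_matrixP => i; by rewrite linearZ /= !rowK -scalerAl QZ.
- move=> a b _ _; apply/row_matrixP => i; by rewrite row_mul !rowK -mulrA QM.
Qed.

End Quot.

Section QuotSimple.
Variables (F : fieldType) (A : falgType F) (I : {vspace A}).
Hypothesis HI : (fullv * I <= I)%VS.
Hypothesis H1I : 1 \notin I.
Hypothesis Hmax : forall I', (fullv * I' <= I')%VS -> (I <= I')%VS -> 1 \notin I' -> I' = I.

Local Notation Q := (Q I).
Local Notation qm := (qm I).
Local Notation qrho := (qrho I).
Local Notation lift := (@lift _ _ I).

Lemma QMI a x : Q (a * x) = Q x *m qrho a. Proof. exact: QM HI a x. Qed.

Lemma Q1_nz : Q 1 != 0.
Proof. by apply: contra H1I => /eqP; apply: Q_eq0. Qed.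

Lemma qrho_simple : simple_sub fullv qrho 1%:M.
Proof.
split.
- by move=> s _; apply: submx1.
- apply: contra Q1_nz => /eqP H0; by rewrite -[Q 1]mulmx1 H0 mulmx0.
move=> V HV _.
set W := (<<[seq lift (row r V) | r <- enum 'I_qm]>>)%VS.
set I' := (I + W)%VS.
have memI' : forall x, x \in I' -> (Q x <= V)%MS.
  move=> x /memv_addP [i Hi [w Hw ->]]; rewrite QD QI // add0r.
  have Pc : lclosed (fun w => Q w <= V)%MS.
    split=> [|x1 y1 H1 H2|c x1 H1]; first by rewrite Q0 sub0mx.
      by rewrite QD addmx_sub.
    by rewrite QZ scalemx_sub.
  apply: (lclosed_span Pc) Hw => y /mapP [r _ ->].
  by rewrite Qlift row_sub.
have memI'2 : forall x, (Q x <= V)%MS -> x \in I'.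
  move=> x /submxP [D HD].
  set w := \sum_(r < qm) D 0 r *: lift (row r V).
  have Hw : w \in W.
    apply: rpred_sum => r _; apply: rpredZ; apply: memv_span.
    by apply: map_f; rewrite mem_enum.
  have HQw : Q w = Q x.
    by rewrite HD mulmx_sum_row Qsum; apply: eq_bigr => r _; rewrite QZ Qlift.
  have Hxw : x - w \in I by apply: Q_eq0; rewrite QB HQw subrr.
  by rewrite -(subrK w x); apply: memv_add.
have Hid : (fullv * I' <= I')%VS.
  apply/prodvP => a x _ Hx; apply: memI'2; rewrite QMI.
  apply: submx_trans (HV a (memvf a)); exact: submxMr (memI' _ Hx).
have [H1|H1] := boolP (1 \in I').
  right; apply/andP; split; first exact: submx1.
  apply/row_subP => r; rewrite row1 -(Qlift (delta_mx 0 r)).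
  rewrite -[lift _]mulr1 QMI; apply: submx_trans (HV _ (memvf _)).
  exact: submxMr (memI' _ H1).
left; have EI : I' = I by apply: Hmax => //; exact: addvSl.
apply/row_matrixP => r; rewrite row0 -(Qlift (row r V)); apply: QI.
have HI' : (I' <= I)%VS by rewrite EI.
apply: (subvP HI'); apply: (subvP (addvSr _ _)); apply: memv_span.
by apply: map_f; rewrite mem_enum.
Qed.

End QuotSimple.

Lemma max_ext (F : fieldType) (A : falgType F) (P : {vspace A} -> Prop) U :
  P U -> exists2 V, P V & (U <= V)%VS /\ forall W, P W -> (V <= W)%VS -> W = V.
Proof.
have main : forall k U, (\dim (fullv : {vspace A}) - \dim U < k)%N -> P U ->
    exists2 V, P V & (U <= V)%VS /\ forall W, P W -> (V <= W)%VS -> W = V.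
  elim=> [//|k IH] U0 Hk PU.
  case: (classic (exists W, [/\ P W, (U0 <= W)%VS & W <> U0])) => [[W [PW UW WU]]|Hn].
    have Hd : (\dim U0 < \dim W)%N.
      rewrite ltn_neqAle dimvS // andbT; apply: contra_notN WU => /eqP Ed.
      by apply/eqP; rewrite eq_sym eqEdim UW Ed leqnn.
    have HdW : (\dim W <= \dim (fullv : {vspace A}))%N by apply: dimvS; apply: subvf.
    have [V PV [WV HV]] := IH W ltac:(lia) PW.
    by exists V => //; split => //; apply: subv_trans WV.
  exists U0 => //; split => // W PW UW; apply: NNPP => WU; apply: Hn; by exists W.
by apply: main; apply: ltnSn.
Qed.

Lemma repB (F : fieldType) (A : falgType F) (S : {vspace A}) m (rho : A -> 'M[F]_m) :
  is_rep S rho -> {in S &, forall a b, rho (a - b) = rho a - rho b}.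
Proof.
move=> Hr a b Ha Hb; rewrite (repD Hr) ?rpredN //; congr (_ + _).
by rewrite -scaleN1r (repZ Hr) // scaleN1r.
Qed.

Section PartC.
Variables (F : fieldType) (A : falgType F) (n : nat) (e : 'I_n.+1 -> A) (B : {vspace A}).
Hypothesis He : idem_decomp e.
Hypothesis HNg : Ngraded_subalg e B.
Hypothesis Hc : complete e B.

Local Notation H := (Bzero e B).
Local Notation Bp := (Bplus e B).

Lemma H_subalg : is_subalg H.
Proof. split; first exact: H1 He HNg. by apply/prodvP => x y Hx Hy; have := HM He HNg Hx Hy. Qed.

Variables (m' : nat) (rho' : A -> 'M[F]_m').
Hypothesis Hr' : is_rep H rho'.
Hypothesis Hs' : simple_sub H rho' 1%:M.
Variable v0 : 'rV[F]_m'.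
Hypothesis Hv0 : v0 != 0.

Definition Jsp : {vspace A} :=
  <<[seq (\sum_(j < \dim H) kermx (orb H rho' v0) r j *: (vbasis H)`_j)%R | r <- enum 'I_(\dim H)]>>%VS.

Lemma memJ1 x : x \in Jsp -> x \in H /\ v0 *m rho' x = 0.
Proof.
have Pc : lclosed (fun x => x \in H /\ v0 *m rho' x = 0).
  split=> [|x1 y1 [H1 E1] [H2 E2]|c x1 [H1 E1]].
  - by rewrite mem0v (rep0 Hr') mulmx0.
  - by rewrite rpredD // (repD Hr') // mulmxDr E1 E2 addr0.
  - by rewrite rpredZ // (repZ Hr') // -scalemxAr E1 scaler0.
apply: (lclosed_span Pc) => y /mapP [r _ ->]; split.
  by apply: rpred_sum => j _; rewrite rpredZ // vbS.
have := orb_comb Hr' v0 (row r (kermx (orb H rho' v0))).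
rewrite -row_mul mulmx_ker row0 => E.
have Es : \sum_(j < \dim H) row r (kermx (orb H rho' v0)) 0 j *: (vbasis H)`_j =
  \sum_(j < \dim H) kermx (orb H rho' v0) r j *: (vbasis H)`_j.
  by apply: eq_bigr => j _; rewrite mxE.
by rewrite Es in E; rewrite -E.
Qed.

Lemma memJ2 x : x \in H -> v0 *m rho' x = 0 -> x \in Jsp.
Proof.
move=> Hx Hx0.
have Hc0 : (\row_j coord (vbasis H) j x <= kermx (orb H rho' v0))%MS.
  by apply/sub_kermxP; rewrite (orb_coord Hr').
case/submxP: Hc0 => D HD.
rewrite (coord_vbasis Hx).
rewrite (eq_bigr (fun j => \sum_(r < \dim H) (D 0 r * kermx (orb H rho' v0) r j) *: (vbasis H)`_j)); last first.
  move=> j _; rewrite -scaler_suml; congr (_ *: _).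
  by have := congr1 (fun M : 'rV[F]_(\dim H) => M 0 j) HD; rewrite !mxE.
rewrite exchange_big /=; apply: rpred_sum => r _.
rewrite (eq_bigr (fun j => D 0 r *: (kermx (orb H rho' v0) r j *: (vbasis H)`_j))); last first.
  by move=> j _; rewrite scalerA.
rewrite -scaler_sumr; apply: rpredZ; apply: memv_span.
by apply: map_f; rewrite mem_enum.
Qed.

Definition Xsp : {vspace A} := (Bp + Jsp)%VS.
Definition I0 : {vspace A} := (fullv * Xsp)%VS.

Lemma J_H : (Jsp <= H)%VS.
Proof. by apply/subvP => x /memJ1 []. Qed.
Lemma X_B : (Xsp <= B)%VS.
Proof.
by rewrite /Xsp subv_add Bp_B; apply: subv_trans J_H (H_B e B).
Qed.
Lemma X_I0 : (Xsp <= I0)%VS.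
Proof. by apply/subvP => x Hx; rewrite -[x]mul1r memv_mul ?memvf. Qed.
Lemma I0_ideal : (fullv * I0 <= I0)%VS.
Proof. by rewrite /I0 prodvA prodvSl // subvf. Qed.

Lemma BX_X : (B * Xsp <= Xsp)%VS.
Proof.
rewrite /Xsp; apply/prodvP => b x Hb /memv_addP [p Hp [j Hj ->]].
have Hbp : b * p \in Bp by have := BBp He HNg Hb Hp.
have [h Hh [p' Hp' Eb]] := B_split HNg Hb.
have [HjH Hj0] := memJ1 Hj.
have -> : b * (p + j) = (b * p + p' * j) + h * j.
  by rewrite mulrDr -addrA Eb mulrDl; congr (_ + _); rewrite mulrDl addrC.
apply: memv_add.
  apply: rpredD => //; have := BpB He HNg Hp' (subvP (H_B e B) _ HjH); exact.
apply: memJ2; first by have := HM He HNg Hh HjH.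
by rewrite (repM Hr') // mulmxA Hj0 mul0mx.
Qed.

Lemma I0_sub : (I0 <= Xsp + Aminus e * B)%VS.
Proof.
case: Hc => Hfull _.
rewrite /I0 -Hfull prodvDl; apply: addvS; first exact: BX_X.
by rewrite -prodvA prodvSr // (subv_trans BX_X X_B).
Qed.

Lemma one_notin_I0 : 1 \notin I0.
Proof.
apply/negP => /(subvP I0_sub) /memv_addP [x Hx [c Hcm E]].
case: Hc => _ Hcap.
have Hc0 : c = 0.
  apply/eqP; rewrite -memv0 -Hcap memv_cap Hcm andbT.
  have -> : c = 1 - x by rewrite E addrC addKr.
  by rewrite rpredB ?(B1 HNg) // (subvP X_B).
move: E; rewrite Hc0 addr0 => E.
move: Hx; rewrite -E => /memv_addP [p Hp [j Hj E1]].
have [HjH Hj0] := memJ1 Hj.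
have Hp0 : p = 0.
  apply/eqP; rewrite -memv0 -(HcapBp B He) memv_cap Hp andbT.
  have -> : p = 1 - j by rewrite E1 addrK.
  by rewrite rpredB // (H1 He HNg).
have Ej : j = 1 by rewrite E1 Hp0 add0r.
move: Hj0; rewrite Ej (rep1 Hr') mulmx1 => E0.
by move: Hv0; rewrite E0 eqxx.
Qed.

End PartC.

Section PartC2.
Variables (F : fieldType) (A : falgType F) (n : nat) (e : 'I_n.+1 -> A) (B : {vspace A}).
Hypothesis He : idem_decomp e.
Hypothesis HNg : Ngraded_subalg e B.
Hypothesis Hc : complete e B.

Local Notation H := (Bzero e B).
Local Notation Bp := (Bplus e B).

Lemma part_c m' (rho' : A -> 'M[F]_m') : is_rep H rho' -> simple_sub H rho' 1%:M ->
  exists m (rho : A -> 'M[F]_m),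
    [/\ is_rep fullv rho, simple_sub fullv rho 1%:M &
        iso_sub H rho (fixsp Bp rho) rho' 1%:M].
Proof.
move=> Hr' Hs'.
have [r Hr0] := nz_row (let: And3 _ X _ := Hs' in X).
set v0 := row r (1%:M : 'M[F]_m').
have HHs := H_subalg He HNg.
pose P (V : {vspace A}) := [/\ (fullv * V <= V)%VS,
  (I0 e B rho' v0 <= V)%VS & 1 \notin V].
have [Im [HIm1 HIm2 HIm3] [_ HImax]] := @max_ext F A P (I0 e B rho' v0)
  (And3 (I0_ideal e B rho' v0) (subvv _) (one_notin_I0 He HNg Hc Hr' Hr0)).
have Hmax : forall I', (fullv * I' <= I')%VS -> (Im <= I')%VS -> 1 \notin I' -> I' = Im.
  move=> I' H1 H2 H3; apply: HImax => //; split => //; exact: subv_trans HIm2 H2.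
set rho := qrho Im.
have Hr : is_rep fullv rho := qrho_rep HIm1.
have Hs : simple_sub fullv rho 1%:M := qrho_simple HIm1 HIm3 Hmax.
exists (qm Im), rho; split => //.
set w := Q Im 1.
have Hw0 : w != 0 := Q1_nz HIm3.
have HQ : forall x, w *m rho x = Q Im x by move=> x; rewrite -QM // mulr1.
have HXIm : (Xsp e B rho' v0 <= Im)%VS := subv_trans (X_I0 e B rho' v0) HIm2.
have HBpIm : (Bp <= Im)%VS by apply: subv_trans HXIm; exact: addvSl.
have HJIm : (Jsp e B rho' v0 <= Im)%VS by apply: subv_trans HXIm; exact: addvSr.
have Hw : (w <= fixsp Bp rho)%MS.
  by apply/(fixspP Bp _ Hr) => p Hp; rewrite HQ QI // (subvP HBpIm).
have Hker1 : forall h, h \in H -> w *m rho h = 0 -> v0 *m rho' h = 0.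
  move=> h Hh; rewrite HQ => /Q_eq0 HhI; apply/eqP; apply: contraT => Hn.
  have [h' Hh' Eh'] := orb_full Hr' HHs Hs' Hn v0.
  rewrite -mulmxA -(repM Hr') // in Eh'.
  have HhhH : h' * h \in H by have := HM He HNg Hh' Hh.
  have Ht : h' * h - 1 \in Jsp e B rho' v0.
    apply: (memJ2 Hr'); first by rewrite rpredB // (H1 He HNg).
    by rewrite (repB Hr') ?(H1 He HNg) // mulmxBr -Eh' (rep1 Hr') mulmx1 subrr.
  have Hhh : h' * h \in Im by apply: (subvP HIm1); have := memv_mul (memvf h') HhI.
  case/negP: HIm3; rewrite -(subKr (h' * h) 1) rpredB //.
  exact: (subvP HJIm).
have Hker2 : forall h, h \in H -> v0 *m rho' h = 0 -> w *m rho h = 0.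
  by move=> h Hh H0; rewrite HQ QI // (subvP HJIm) // memJ2.
have [g Hg] := transport (rep_sub (subvf H) Hr) Hr' Hker1.
have Hgen : forall u : 'rV_(qm Im), (u <= fixsp Bp rho)%MS -> exists2 h, h \in H & u = w *m rho h.
  by move=> u Hu; apply: (fix_gen He HNg Hc Hr Hs Hu Hw Hw0).
have Hstab := fix_Hstable He HNg Hr.
exists g; split.
- apply/andP; split; first exact: submx1.
  apply/row_subP => r'; rewrite row1.
  have [h' Hh' ->] := orb_full Hr' HHs Hs' Hr0 (delta_mx 0 r').
  rewrite -Hg //; apply: submxMr; apply: submx_trans (Hstab h' Hh'); exact: submxMr Hw.
- have := mxrank_mul_ker (fixsp Bp rho) g.
  suff -> : (fixsp Bp rho :&: kermx g)%MS = 0 by rewrite mxrank0 addn0.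
  apply/row_matrixP => r'; rewrite row0; set u := row r' _.
  have Hu1 : (u <= fixsp Bp rho)%MS := submx_trans (row_sub _ _) (capmxSl _ _).
  have Hu2 : u *m g = 0 by apply/sub_kermxP; exact: submx_trans (row_sub _ _) (capmxSr _ _).
  have [h Hh Eu] := Hgen u Hu1.
  by rewrite Eu Hker2 // -Hg // -Eu.
- move=> s Hs_; apply/row_matrixP => r'; rewrite !row_mul.
  have [h Hh ->] := Hgen _ (row_sub r' _).
  have Hsh : s * h \in H by have := HM He HNg Hs_ Hh.
  rewrite -[w *m rho h *m rho s]mulmxA -(rM Hr) Hg // (repM Hr') // mulmxA -Hg //.
Qed.

End PartC2.

Unset Implicit Arguments.

Theorem lemma3p6 (F : fieldType) (A : falgType F) (n : nat)
    (e : 'I_n.+1 -> A) (B : {vspace A}) :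
  idem_decomp e ->
  Ngraded_subalg e B ->
  complete e B ->
  proj_right fullv B ->
  proj_left B (Bzero e B) ->
  pre_borelic B (Bzero e B) (Bplus e B).
Proof.
move=> He HNg Hc Hpr Hpl.
have HBs : is_subalg B by case: HNg.
split.
- split=> //; split; first exact: H_subalg He HNg.
  exact: H_B.
- split; last split.
  + split; first exact: Bp_B.
      by apply/prodvP => x y Hx Hy; have := BBp He HNg Hx Hy.
    by apply/prodvP => x y Hx Hy; have := BpB He HNg Hx Hy.
  + exact: B_eq HNg.
  + exact: HcapBp He.
- by split.
- split.
  + move=> m rho Hr Hs; by have := part_a He HNg Hc Hr Hs.
  + move=> m1 rho1 m2 rho2 Hr1 Hs1 Hr2 Hs2; split.
      exact: part_b_fwd.
    by have := part_b_bwd He HNg Hc Hr1 Hs1 Hr2 Hs2.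
  + move=> m' rho' Hr' Hs'; by have := part_c He HNg Hc Hr' Hs'.
- move=> x Hx; by have := jacobson He HNg Hx.
Qed.
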